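(* Let $\Lambda$ be a finite $k$-graph with no sources and let $\{t_\lambda\}_{\lambda\in\Lambda}$ be a permutative representation of $C^*(\Lambda)$ on $\mathcal H$, with orthonormal basis $\{e_i\}_{i\in I}$, sets $J_\lambda,K_\lambda\subseteq I$, bijections $\tilde\sigma_\lambda:J_\lambda\to K_\lambda$ and coding maps $\tilde\sigma^n:I\to I$. Equip $I$ with counting measure and identify $\mathcal H$ with $\ell^2(I)$ via $e_i\leftrightarrow\chi_{\{i\}}$. Then the data $D_\lambda=J_\lambda$, $\tau_\lambda=\tilde\sigma_\lambda$ (so $R_\lambda=K_\lambda$), $\tau^n=\tilde\sigma^n$ form a $\Lambda$-semibranching function system on $I$, and the associated $\Lambda$-semibranching representation coincides with $\{t_\lambda\}_{\lambda\in\Lambda}$.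
   Context: A $k$-graph ($k\ge1$) is a countable small category $\Lambda$ with a functor $d:\Lambda\to\mathbb N^k$ satisfying unique factorization: if $d(\lambda)=m+n$ there are unique $\mu,\nu$ with $\lambda=\mu\nu$, $d(\mu)=m$, $d(\nu)=n$. $\Lambda^0$ = vertices, $r,s$ = range, source, $\Lambda^n=d^{-1}(n)$, $v\Lambda^n=\{\lambda\in\Lambda^n:r(\lambda)=v\}$, $s(\lambda)\Lambda=\{\nu:r(\nu)=s(\lambda)\}$; finite: each $\Lambda^n$ finite; no sources: each $v\Lambda^n$ nonempty. A representation of $C^*(\Lambda)$ is a family of partial isometries $\{t_\lambda\}$ satisfying (CK1) $\{t_v\}$ mutually orthogonal projections, (CK2) $t_\lambda t_\eta=t_{\lambda\eta}$ if $s(\lambda)=r(\eta)$, (CK3) $t_\lambda^*t_\lambda=t_{s(\lambda)}$, (CK4) $t_v=\sum_{\lambda\in v\Lambda^n}t_\lambda t_\lambda^*$. Permutative: orthonormal basis $\{e_i\}_{i\in I}$ and for each $\lambda$ sets $J_\lambda,K_\lambda\subseteq I$ and a bijection $\tilde\sigma_\lambda:J_\lambda\to K_\lambda$ with (a) $\bigcup_{\lambda\in\Lambda^n}J_\lambda=\bigcup_{\lambda\in\Lambda^n}K_\lambda=I$ for all $n$; (b) $K_\nu\subseteq J_\lambda$ and $\tilde\sigma_\lambda\circ\tilde\sigma_\nu=\tilde\sigma_{\lambda\nu}$ for $\nu\in s(\lambda)\Lambda$; (c) $t_\lambda e_i=e_{\tilde\sigma_\lambda(i)}$ for $i\in J_\lambda$,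 $0$ otherwise; (d) $t_\lambda^*e_{\tilde\sigma_\lambda(i)}=e_i$ for $i\in J_\lambda$, $t_\lambda^*e_j=0$ for $j\in K_{\lambda'}$, $\lambda'\ne\lambda$, $d(\lambda')=d(\lambda)$. For each $n$ the $K_\lambda$ ($\lambda\in\Lambda^n$) partition $I$, and $\tilde\sigma^n(i)$ for $i\in K_\lambda$, $\lambda\in\Lambda^n$, is the unique $i_n\in J_\lambda$ with $\tilde\sigma_\lambda(i_n)=i$. A semibranching function system on a measure space $(X,\mu)$ is a finite family of measurable maps $\sigma_i:D_i\to X$ ($D_i$ measurable) with $R_i=\sigma_i(D_i)$ satisfying $\mu(X\setminus\bigcup R_i)=0$, $\mu(R_i\cap R_j)=0$ for $i\ne j$, and Radon–Nikodym derivatives $\Phi_{\sigma_i}=d(\mu\circ\sigma_i)/d\mu>0$ a.e. on $D_i$; a coding map is a measurable $\sigma:X\to X$ with $\sigma\circ\sigma_i=\mathrm{id}$ on $D_i$. A $\Lambda$-semibranching function system on $(X,\mu)$ consists of measurable sets $D_\lambda$, maps $\tau_\lambda:D_\lambda\to X$ and $\tau^m:X\to X$ ($m\in\mathbb N^k$) such that: (a) for each $m$, $\{\tau_\lambda:d(\lambda)=m\}$ is a semibranching function system with coding map $\tau^m$; (b) $\tau_v=\mathrm{id}$ and $\mu(D_v)>0$ for $v\in\Lambda^0$; (c) with $R_\lambda=\tau_\lambda(D_\lambda)$, for $\nu\in s(\lambda)\Lambda$, $R_\nu\subseteq D_\lambda$ up to null sets and $\tau_\lambda\tau_\nu=\tau_{\lambda\nu}$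 a.e.; (d) $\tau^m\circ\tau^n=\tau^{m+n}$. The associated $\Lambda$-semibranching representation on $L^2(X,\mu)$ is $S_\lambda f(x)=(\Phi_{\tau_\lambda}\circ\tau^{d(\lambda)})^{-1/2}(x)\,\chi_{R_\lambda}(x)\,f(\tau^{d(\lambda)}(x))$.
   Formalization: The representation $\{t_\lambda\}$ has $t_v\neq 0$ for every vertex v ∈ Λ⁰, that is, every vertex projection is nonzero and each $J_v$ is nonempty. The statement above fails without it. *)

(* Defs.v *)
From HB Require Import structures.
From mathcomp Require Import all_boot all_order all_algebra.
From mathcomp Require Import all_classical all_reals all_analysis.
From mathcomp Require Import complex.
Set Implicit Arguments.
Unset Strict Implicit.
Unset Printing Implicit Defensive.
Import Order.TTheory GRing.Theory Num.Theory.
Local Open Scope classical_set_scope.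
Local Open Scope ring_scope.

Definition Nk (k : nat) := {ffun 'I_k -> nat}.
Definition Nk0 (k : nat) : Nk k := [ffun=> 0%N].
Definition Nkadd (k : nat) (m n : Nk k) : Nk k := [ffun i => (m i + n i)%N].

(* Composition kcomp l m is the composite "l m" (first m then l), meaningful *)
(* when ks l = kr m; kid v is the identity morphism at v (so vertices are   *)
(* identified with the identity morphisms, i.e. Lambda^0).                  *)
Record kgraph (k : nat) := KGraph {
  kvert : countType;
  kmor : countType;
  kr : kmor -> kvert;
  ks : kmor -> kvert;
  kid : kvert -> kmor;
  kcomp : kmor -> kmor -> kmor;
  kdeg : kmor -> Nk k;
  kr_id : forall v, kr (kid v) = v;
  ks_id : forall v, ks (kid v) = v;
  kr_comp : forall l m, ks l = kr m -> kr (kcomp l m) = kr l;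
  ks_comp : forall l m, ks l = kr m -> ks (kcomp l m) = ks m;
  kcomp_idl : forall l, kcomp (kid (kr l)) l = l;
  kcomp_idr : forall l, kcomp l (kid (ks l)) = l;
  kcompA : forall l m n, ks l = kr m -> ks m = kr n ->
    kcomp (kcomp l m) n = kcomp l (kcomp m n);
  kdeg_id : forall v, kdeg (kid v) = Nk0 k;
  kdeg_comp : forall l m, ks l = kr m -> kdeg (kcomp l m) = Nkadd (kdeg l) (kdeg m);
  kfact : forall l (m n : Nk k), kdeg l = Nkadd m n ->
    exists! p : kmor * kmor,
      [/\ ks p.1 = kr p.2, kcomp p.1 p.2 = l, kdeg p.1 = m & kdeg p.2 = n]
}.

Definition kfinite k (L : kgraph k) : Prop :=
  forall n : Nk k, finite_set [set l : kmor L | kdeg l = n].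

Definition no_sources k (L : kgraph k) : Prop :=
  forall (v : kvert L) (n : Nk k), exists l : kmor L, kr l = v /\ kdeg l = n.

Section L2.
Variables (R : realType) (I : choiceType).
Local Open Scope complex_scope.

Definition sqmod (z : R[i]) : R := (complex.Re z) ^+ 2 + (complex.Im z) ^+ 2.

Definition norm2 (f : I -> R[i]) : \bar R :=
  (\esum_(i in [set: I]) (sqmod (f i))%:E)%E.

Definition l2 (f : I -> R[i]) : Prop := (norm2 f < +oo)%E.

Definition rsum (h : I -> R) : R :=
  fine (\esum_(i in [set: I]) (Num.max (h i) 0)%:E)%E
  - fine (\esum_(i in [set: I]) (Num.max (- h i) 0)%:E)%E.

Definition csum (h : I -> R[i]) : R[i] :=
  Complex (rsum (fun i => complex.Re (h i))) (rsum (fun i => complex.Im (h i))).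

Definition ip (f g : I -> R[i]) : R[i] := csum (fun i => f i * Num.conj (g i)).

(* operators on l^2(I) (only their values on l^2(I) matter) *)
Definition op := (I -> R[i]) -> (I -> R[i]).

Definition opeq (T S : op) : Prop := forall f, l2 f -> T f = S f.

Definition zero_op : op := fun _ _ => 0.

Definition bounded_linear (T : op) : Prop :=
  [/\ forall f, l2 f -> l2 (T f),
      forall (a : R[i]) f g, l2 f -> l2 g ->
        T (fun i => a * f i + g i) = (fun i => a * T f i + T g i) &
      exists M : R, forall f, l2 f -> (norm2 (T f) <= M%:E * norm2 f)%E].

Definition is_adjoint (T S : op) : Prop :=
  forall f g, l2 f -> l2 g -> ip (T f) g = ip f (S g).

End L2.

Section Rep.
Variables (R : realType) (k : nat) (L : kgraph k) (I : choiceType).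
Variables (t tstar : kmor L -> op R I).

Definition is_rep : Prop :=
  [/\
      forall l, [/\ bounded_linear (t l), bounded_linear (tstar l),
                    is_adjoint (t l) (tstar l) &
                    opeq (fun f => t l (tstar l (t l f))) (t l)],
      (forall v, opeq (fun f => t (kid v) (t (kid v) f)) (t (kid v))
                 /\ opeq (tstar (kid v)) (t (kid v)))
      /\ (forall v w, v <> w -> opeq (fun f => t (kid v) (t (kid w) f)) (@zero_op R I)),
      forall l m, ks l = kr m -> opeq (fun f => t l (t m f)) (t (kcomp l m)),
      forall l, opeq (fun f => tstar l (t l f)) (t (kid (ks l))) &
      forall (v : kvert L) (n : Nk k) f, l2 f -> forall i,
        t (kid v) f i
        = (\sum_(l \in [set l : kmor L | kr l = v /\ kdeg l = n]) t l (tstar l f) i)%R].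

Definition ebasis (i : I) : I -> R[i] := fun j => if j == i then 1 else 0.

Definition permutative (J K : kmor L -> set I) (sig : kmor L -> I -> I) : Prop :=
  [/\ forall l, set_bij (J l) (K l) (sig l),
      forall n : Nk k,
        \bigcup_(l in [set l : kmor L | kdeg l = n]) J l = [set: I]
        /\ \bigcup_(l in [set l : kmor L | kdeg l = n]) K l = [set: I],
      forall l nu, kr nu = ks l ->
        K nu `<=` J l /\ (forall i, J nu i -> sig l (sig nu i) = sig (kcomp l nu) i),
      forall l i, (J l i -> t l (ebasis i) = ebasis (sig l i))
                  /\ (~ J l i -> t l (ebasis i) = (fun _ => 0)) &
      forall l, (forall i, J l i -> tstar l (ebasis (sig l i)) = ebasis i)
        /\ (forall l' j, l' <> l -> kdeg l' = kdeg l -> K l' j ->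
              tstar l (ebasis j) = (fun _ => 0))].

Definition coding_maps (J K : kmor L -> set I) (sig : kmor L -> I -> I)
    (sign : Nk k -> I -> I) : Prop :=
  forall (n : Nk k) l i, kdeg l = n -> K l i -> J l (sign n i) /\ sig l (sign n i) = i.

End Rep.

Section SBFS.
Local Open Scope complex_scope.
Local Open Scope ereal_scope.
Variables (d : measure_display) (X : measurableType d) (R : realType).
Variable (mu : {measure set X -> \bar R}).

Definition RN_deriv (D : set X) (s : X -> X) (Phi : X -> R) : Prop :=
  [/\ measurable_fun D Phi, (forall x, D x -> (0 <= Phi x)%R) &
      forall E, measurable E -> E `<=` D ->
        mu (s @` E) = \int[mu]_(x in E) (Phi x)%:E].

Definition sbfs (Ix : Type) (A : set Ix) (D : Ix -> set X) (s : Ix -> X -> X)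
    (Phi : Ix -> X -> R) (cod : X -> X) : Prop :=
  [/\ finite_set A
      /\ (forall a, A a -> measurable (D a) /\ measurable_fun (D a) (s a)),
      mu (~` \bigcup_(a in A) (s a @` D a)) = 0,
      forall a b, A a -> A b -> a <> b -> mu ((s a @` D a) `&` (s b @` D b)) = 0,
      forall a, A a -> RN_deriv (D a) (s a) (Phi a)
                       /\ {ae mu, forall x, D a x -> (0 < Phi a x)%R} &
      measurable_fun [set: X] cod
      /\ (forall a, A a -> forall x, D a x -> cod (s a x) = x)].

Definition LSBFS (k : nat) (L : kgraph k) (D : kmor L -> set X)
    (tau : kmor L -> X -> X) (taum : Nk k -> X -> X) : Prop :=
  exists Phi : kmor L -> X -> R,
  [/\
      forall n : Nk k, sbfs [set l : kmor L | kdeg l = n] D tau Phi (taum n),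
      forall v : kvert L, (forall x, D (kid v) x -> tau (kid v) x = x)
                          /\ 0 < mu (D (kid v)),
      (forall l nu, kr nu = ks l ->
         mu ((tau nu @` D nu) `\` D l) = 0
         /\ {ae mu, forall x, D nu x -> tau l (tau nu x) = tau (kcomp l nu) x}) &
      forall m n : Nk k, taum m \o taum n = taum (Nkadd m n)].

Definition sb_rep (k : nat) (L : kgraph k) (D : kmor L -> set X)
    (tau : kmor L -> X -> X) (taum : Nk k -> X -> X) (Phi : kmor L -> X -> R)
    (l : kmor L) (f : X -> R[i]) : X -> R[i] :=
  fun x => (((\1_(tau l @` D l) x : R) / Num.sqrt (Phi l (taum (kdeg l) x)))%:C
            * f (taum (kdeg l) x))%R.

End SBFS.

(* A set I viewed as a measurable space with the discrete sigma-algebra     *)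
(* (all subsets measurable); it carries the counting measure.               *)
Definition discr (I : Type) : Type := I.
HB.instance Definition _ (I : pointedType) := Pointed.on (discr I).
HB.instance Definition _ (I : pointedType) :=
  @isMeasurable.Build default_measure_display (discr I) discrete_measurable
    discrete_measurable0 discrete_measurableC discrete_measurableU.

Definition count_meas (R : realType) (I : pointedType)
  : {measure set (discr I) -> \bar R} := @counting (discr I) R.

(* Main.v *)
Require Import Defs.
From HB Require Import structures.
From mathcomp Require Import all_boot all_order all_algebra.
From mathcomp Require Import all_classical all_reals all_analysis.
From mathcomp Require Import complex lra.
From mathcomp Require finmap.
Import Order.TTheory GRing.Theory Num.Theory.
Local Open Scope classical_set_scope.
Local Open Scope ring_scope.

Lemma esum_supp (R : realType) (I : choiceType) (a : I -> \bar R) j :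
  (forall i, i != j -> a i = 0%E) -> (0 <= a j)%E ->
  (\esum_(i in [set: I]) a i = a j)%E.
Proof.
move=> h0 hj; rewrite -(esum_set1 hj) [RHS]esum_mkcond; apply: eq_esum => i _.
have [->|ij] := eqVneq i j; first by rewrite mem_set.
by rewrite h0 // memNset //= => /eqP; rewrite (negbTE ij).
Qed.

Lemma rsum_supp (R : realType) (I : choiceType) (h : I -> R) j :
  (forall i, i != j -> h i = 0) -> rsum h = h j.
Proof.
move=> h0; rewrite /rsum.
rewrite (@esum_supp _ _ _ j); last 2 first.
- by move=> i /h0 ->; rewrite maxxx.
- by rewrite lee_fin le_max lexx orbT.
rewrite (@esum_supp _ _ _ j); last 2 first.
- by move=> i /h0 ->; rewrite oppr0 maxxx.
- by rewrite lee_fin le_max lexx orbT.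
rewrite /= /Order.max; do 2 case: ifPn => ?; lra.
Qed.

Lemma csum_supp (R : realType) (I : choiceType) (h : I -> R[i]) j :
  (forall i, i != j -> h i = 0) -> csum h = h j.
Proof.
move=> h0; rewrite /csum (@rsum_supp _ _ _ j); last by move=> i /h0 ->.
rewrite (@rsum_supp _ _ _ j); last by move=> i /h0 ->.
by case: (h j).
Qed.

Lemma ip_e (R : realType) (I : choiceType) (h : I -> R[i]) j :
  ip h (ebasis R j) = h j.
Proof.
rewrite /ip (@csum_supp _ _ _ j).
  by rewrite /ebasis eqxx conjC1 mulr1.
by move=> i ij; rewrite /ebasis (negbTE ij) conjC0 mulr0.
Qed.

Lemma ip_0 (R : realType) (I : choiceType) (h : I -> R[i]) :
  ip h (fun _ => 0) = 0.
Proof.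
rewrite /ip /csum /rsum !esum1 ?subrr //= => i _;
  by rewrite conjC0 mulr0 /= ?oppr0 maxxx.
Qed.

Lemma l2_e (R : realType) (I : choiceType) (j : I) : l2 (ebasis R j).
Proof.
rewrite /l2 /norm2 (@esum_supp _ _ _ j) ?ltry //.
  by move=> i ij; rewrite /ebasis (negbTE ij) /sqmod /= expr0n /= addr0.
by rewrite lee_fin /sqmod addr_ge0 // sqr_ge0.
Qed.

Lemma counting_inj (R : realType) (T : choiceType) (A : set T) (f : T -> T) :
  {in A &, injective f} -> counting (f @` A) = @counting _ R A.
Proof.
move=> fi; have e := inj_card_eq fi.
rewrite /counting; have [fA|nfA] := pselect (finite_set A).
  have [n An] := (finite_setP A).1 fA.
  have fAn : (f @` A #= `I_n)%card by exact: card_eq_trans e An.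
  rewrite !asboolT //; last by apply/finite_setP; exists n.
  by rewrite (card_fset_set An) (card_fset_set fAn).
rewrite !asboolF //; move=> [n fAn]; apply: nfA; apply/finite_setP; exists n.
by apply: card_eq_trans fAn; rewrite card_eq_sym.
Qed.

Theorem proposition4p7 (R : realType) (k : nat) (L : kgraph k)
    (Lfin : kfinite L) (Lns : no_sources L)
    (I : pointedType) (t tstar : kmor L -> op R I)
    (J K : kmor L -> set I) (sig : kmor L -> I -> I) (sign : Nk k -> I -> I) :
  is_rep t tstar ->
  (forall v : kvert L, ~ opeq (t (kid v)) (@zero_op R I)) ->
  permutative t tstar J K sig ->
  coding_maps J K sig sign ->
  LSBFS (count_meas R I) (J : kmor L -> set (discr I)) sig sign
  /\ forall Phi : kmor L -> discr I -> R,
       (forall l, RN_deriv (count_meas R I) (J l) (sig l) (Phi l)) ->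
       forall (l : kmor L) (f : I -> R[i]), l2 f ->
         sb_rep (J : kmor L -> set (discr I)) sig sign Phi l f = t l f.
Proof.
move=> [hop [CK1a CK1b] CK2 CK3 CK4] tnz [bij cover comp tc tsd] cod.
have l2e := @l2_e R I.
have e_inj : forall i j : I, ebasis R i = ebasis R j -> i = j.
  move=> i j /(congr1 (fun g => g j)); rewrite /ebasis eqxx.
  by case: eqP => [-> //|_ /eqP]; rewrite eq_sym oner_eq0.
have e_nz : forall i : I, ebasis R i <> (fun _ => 0).
  move=> i /(congr1 (fun g => g i)); rewrite /ebasis eqxx => /eqP.
  by rewrite oner_eq0.
have coord : forall l f, l2 f -> forall x, t l f x = ip f (tstar l (ebasis R x)).
  move=> l f hf x; rewrite -[LHS](@ip_e R I (t l f) x).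
  by have [_ _ adj _] := hop l; rewrite adj.
have invK : forall l j, K l j -> exists y, J l y /\ sig l y = j.
  by move=> l j Kj; have [_ _ bs] := bij l; have [y Jy <-] := bs j Kj; exists y.
have KJ : forall l y, J l y -> K l (sig l y).
  by move=> l y Jy; have [bf _ _] := bij l; exact: bf.
have injJ : forall l, {in J l &, injective (sig l)}.
  by move=> l; have [] := bij l.
have imgK : forall l, sig l @` J l = K l.
  move=> l; apply/seteqP; split; first by move=> _ [y /KJ Ky <-].
  by move=> j /invK [y [Jy <-]]; exists y.
have Kdisj : forall a b j, kdeg a = kdeg b -> a <> b -> K a j -> K b j -> False.
  move=> a b j dab nab /invK [y [Jy <-]] Kb.
  have [h1 h2] := tsd a.
  have := h2 b (sig a y) (nesym nab) (esym dab) Kb.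
  by rewrite h1 //; apply: e_nz.
have deg0 : forall l : kmor L, kdeg l = Nk0 k -> l = kid (kr l).
  move=> l dl.
  have dl' : kdeg l = Nkadd (Nk0 k) (Nk0 k).
    by rewrite dl; apply/ffunP => i; rewrite !ffunE.
  have [p [_ up]] := kfact dl'.
  have e1 := up (kid (kr l), l).
  have e2 := up (l, kid (ks l)).
  have : (kid (kr l), l) = (l, kid (ks l)).
    rewrite -e1 ?e2 //; split => //=; rewrite ?ks_id ?kr_id ?kcomp_idl ?kcomp_idr ?kdeg_id //.
  by case=> ->.

have kidid : forall v : kvert L, Defs.kcomp (kid v) (kid v) = kid v.
  by move=> v; have := kcomp_idl (kid v); rewrite kr_id.
have sigid : forall v i, J (kid v) i -> sig (kid v) i = i.
  move=> v i Ji.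
  have [|c1 c2] := comp (kid v) (kid v); first by rewrite kr_id ks_id.
  apply: (injJ (kid v)); rewrite ?inE //.
    by apply: c1; exact: KJ.
  by rewrite c2 // kidid.
have JK0 : forall v, J (kid v) = K (kid v).
  move=> v; rewrite -imgK; apply/seteqP; split.
    by move=> i Ji; exists i => //; rewrite sigid.
  by move=> _ [i Ji <-]; rewrite sigid.
have tcJ : forall l i, J l i -> t l (ebasis R i) = ebasis R (sig l i).
  by move=> l i Ji; have [h _] := tc l i; exact: h.
have tcN : forall l i, ~ J l i -> t l (ebasis R i) = (fun _ => 0).
  by move=> l i Ji; have [_ h] := tc l i; exact: h.
have tsJ : forall l i, J l i -> tstar l (ebasis R (sig l i)) = ebasis R i.
  by move=> l i Ji; have [h _] := tsd l; exact: h.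
have Jsrc : forall l j, J l j -> J (kid (ks l)) j.
  move=> l j Jj.
  have := (cover (Nk0 k)).1; rewrite -subTset => /(_ j Logic.I) [l0 dl0 Jl0].
  rewrite (deg0 l0 dl0) in Jl0.
  have [ew|nw] := eqVneq (kr l0) (ks l); first by rewrite -ew.
  exfalso.
  have := CK1b (ks l) (kr l0) (fun h => (negP nw) (introT eqP (esym h))) _ (l2e j).
  rewrite /= tcJ // sigid //.
  have := CK3 l _ (l2e j); rewrite /= tcJ // tsJ // => <-.
  by apply: e_nz.
have Kr : forall l j, K l j -> J (kid (kr l)) j.
  move=> l j Kj; have [|c1 _] := comp (kid (kr l)) l; first by rewrite ks_id.
  exact: c1.
have vert_eq : forall v w j, J (kid v) j -> J (kid w) j -> v = w.
  move=> v w j; rewrite !JK0 => Kv Kw.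
  have [e|ne] := eqVneq (kid v) (kid w).
    by rewrite -(kr_id v) e kr_id.
  by exfalso; apply: (Kdisj _ _ j _ (elimN eqP ne)) => //; rewrite !kdeg_id.
have Jcomp : forall l nu j, kr nu = ks l -> J nu j -> J (Defs.kcomp l nu) j.
  move=> l nu j e Jj; apply/not_notP => nJ.
  have := CK2 l nu (esym e) _ (l2e j); rewrite /= (tcJ nu j Jj) (tcN _ j nJ) tcJ.
    by apply: e_nz.
  by have [c1 _] := comp l nu e; apply: c1; exact: KJ.
have coverK : forall n i, exists l, kdeg l = n /\ K l i.
  move=> n i; have := (cover n).2; rewrite -subTset => /(_ i Logic.I) [l dl Kl].
  by exists l.
have signE : forall l y, J l y -> sign (kdeg l) (sig l y) = y.
  move=> l y Jy; have [h1 h2] := cod (kdeg l) l (sig l y) erefl (KJ _ _ Jy).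
  by apply: (injJ l); rewrite ?inE.

have cnt : forall A : set (discr I), count_meas R I A = counting A by [].
split.
  exists (fun _ _ => 1); split.
  - move=> n; split.
    + by split; [exact: Lfin n | move=> a _; split].
    + rewrite (_ : ~` _ = set0) ?measure0 //; apply/seteqP; split => // x /= nx.
      have [l [dl Kl]] := coverK n x; apply: nx; exists l => //; by rewrite imgK.
    + move=> a b /= da db nab; rewrite !imgK (_ : K a `&` K b = set0) ?measure0 //.
      apply/seteqP; split => // x [Ka Kb].
      by apply: (Kdisj a b x _ nab Ka Kb); rewrite da db.
    + move=> a _; split; last exact: aeW.
      split; first exact: measurable_cst.
        by move=> x _; exact: ler01.
      move=> E mE EJ; rewrite integral_cst // mul1e !cnt counting_inj //.
      by move=> x y /[!inE] Ex Ey; apply: (injJ a); rewrite inE; apply: EJ.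
    + split=> //; move=> a /= da x Jx; rewrite -da; exact: signE.
  - move=> v; split; first exact: sigid.
    have [[x Jx]|nx] := pselect (exists x, J (kid v) x); last first.
      exfalso; apply: (tnz v) => f hf; apply/funext => x; rewrite coord //.
      rewrite ((CK1a v).2 _ (l2e x)) tcN ?ip_0 // => Jx; apply: nx; by exists x.
    rewrite cnt /counting; case: asboolP => fin; last by rewrite ltry.
    rewrite lte_fin ltr0n finmap.cardfs_gt0; apply/finmap.fset0Pn; exists x.
    by rewrite in_fset_set // inE.
  - move=> l nu e; split.
      rewrite imgK (_ : K nu `\` J l = set0) ?measure0 //; apply/seteqP; split=> // x [Kx nJ].
      by apply: nJ; have [c1 _] := comp l nu e; exact: c1.
    by apply: aeW => x Jx; have [_ c2] := comp l nu e; exact: c2.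
  - move=> m n; apply/funext => i /=.
    have [l [dl Kl]] := coverK n i; have [y [Jy sy]] := invK l i Kl.
    have [l' [dl' Kl']] := coverK m y; have [y' [Jy' sy']] := invK l' y Kl'.
    have e : kr l' = ks l := vert_eq _ _ y (Kr l' y Kl') (Jsrc l y Jy).
    have sn : sign n i = y by rewrite -sy -dl signE.
    have sm : sign m y = y' by rewrite -sy' -dl' signE.
    rewrite sn sm.
    have Jc := Jcomp l l' y' e Jy'.
    have [_ c2] := comp l l' e.
    have <- : sig (Defs.kcomp l l') y' = i by rewrite -c2 // sy' sy.
    have dc : kdeg (Defs.kcomp l l') = Nkadd m n.
      by rewrite kdeg_comp ?dl ?dl' //; apply/ffunP => z; rewrite !ffunE addnC.
    by rewrite -dc signE.
move=> Phi hPhi l f hf; apply/funext => x; rewrite /sb_rep coord // indicE.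
have [Kx|nKx] := pselect (K l x).
  have [y [Jy <-]] := invK l x Kx.
  rewrite signE // tsJ // ip_e mem_set; last by exists y.
  have P1 : Phi l y = 1.
    have [_ _ h] := hPhi l.
    have h1 : [set y] `<=` J l by move=> _ ->.
    have := h [set y] Logic.I h1.
    rewrite image_set1 (eq_integral (cst (Phi l y)%:E)); last first.
      by move=> z; rewrite inE => ->.
    rewrite integral_cst // !cnt /counting !asboolT ?fset_set1 ?finmap.cardfs1 ?mule1 //.
    by case.
  rewrite P1 sqrtr1 divr1 (_ : real_complex R 1 = 1) ?mul1r //.
have [l' [dl' Kl']] := coverK (kdeg l) x.
have nl : l' <> l by move=> el; apply: nKx; rewrite -el.
have [_ h2] := tsd l.
rewrite (h2 l' x nl dl' Kl') ip_0 imgK memNset // mul0r.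
by rewrite (_ : real_complex R 0 = 0) ?mul0r.
Qed.
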